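(* Let $p$ be a prime, $n$ a natural number, and let $A$ be either a pre-Lie ring or a left brace of cardinality $p^n$ which is both left nilpotent and right nilpotent. Then $A^{[(n+1)^{n+1}]}=0$.
   Context: A (left) brace is a set $A$ with binary operations $+,\circ$ such that $(A,+)$ is an abelian group, $(A,\circ)$ is a group, and $a\circ(b+c)+a=a\circ b+a\circ c$; write $a*b=a\circ b-a-b$. A pre-Lie ring is an abelian group $(A,+)$ with a biadditive product $\cdot$ satisfying $(x\cdot y)\cdot z-x\cdot(y\cdot z)=(y\cdot x)\cdot z-y\cdot(x\cdot z)$. Let $\star$ denote $*$ for braces and $\cdot$ for pre-Lie rings; for additive subgroups $X,Y$, $X\star Y$ is the additive subgroup generated by $\{x\star y\}$. Set $A^1=A^{(1)}=A^{[1]}=A$, $A^{i+1}=A\star A^i$, $A^{(i+1)}=A^{(i)}\star A$, $A^{[i+1]}=\sum_{j=1}^{i}A^{[j]}\star A^{[i+1-j]}$. $A$ is left nilpotent if $A^m=0$ for some $m$, right nilpotent if $A^{(m)}=0$ for some $m$. *)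

(* Defs.v *)
From HB Require Import structures.
From mathcomp Require Import all_boot all_order all_algebra.
Set Implicit Arguments. Unset Strict Implicit. Unset Printing Implicit Defensive.
Import GRing.Theory.
Local Open Scope ring_scope.

Section Defs.
Variable V : finZmodType.

Definition is_addsub (H : {set V}) : bool :=
  (0 \in H) && [forall x in H, forall y in H, (x - y) \in H].

Definition addspan (S : {set V}) : {set V} :=
  \bigcap_(H : {set V} | is_addsub H && (S \subset H)) H.

Variable op : V -> V -> V.

Definition starset (X Y : {set V}) : {set V} :=
  addspan [set op x y | x in X, y in Y].

(* A^i : A^1 = A, A^(i+1) = A star A^i *)
Definition leftpow (i : nat) : {set V} :=
  iter i.-1 (fun X => starset setT X) setT.

(* A^(i) : A^(1) = A, A^(i+1) = A^(i) star A *)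
Definition rightpow (i : nat) : {set V} :=
  iter i.-1 (fun X => starset X setT) setT.

(* given s = [:: A^[1]; ...; A^[i]] (i >= 1), compute A^[i+1]
   = sum_{j=1}^{i} A^[j] star A^[i+1-j] ; for s = [::] return A = A^[1] *)
Definition strong_next (s : seq {set V}) : {set V} :=
  if s is [::] then setT
  else addspan (\bigcup_(j < size s)
                  starset (nth setT s j) (nth setT s ((size s).-1 - j)%N)).

Fixpoint strong_list (k : nat) : seq {set V} :=
  if k is k'.+1 then rcons (strong_list k') (strong_next (strong_list k'))
  else [::].

(* A^[i] for i >= 1 *)
Definition strongpow (i : nat) : {set V} := nth setT (strong_list i) i.-1.

Definition left_nilpotent : Prop := exists m : nat, leftpow m = [set 0].
Definition right_nilpotent : Prop := exists m : nat, rightpow m = [set 0].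
End Defs.

Definition is_preLie (V : finZmodType) (mul : V -> V -> V) : Prop :=
  (forall x y z, mul (x + y) z = mul x z + mul y z) /\
  (forall x y z, mul x (y + z) = mul x y + mul x z) /\
  (forall x y z, mul (mul x y) z - mul x (mul y z)
                 = mul (mul y x) z - mul y (mul x z)).

Definition is_brace (V : finZmodType) (circ : V -> V -> V) : Prop :=
  (forall a b c, circ a (circ b c) = circ (circ a b) c) /\
  (exists e, (forall a, circ e a = a /\ circ a e = a) /\
             (forall a, exists b, circ a b = e /\ circ b a = e)) /\
  (forall a b c, circ a (b + c) + a = circ a b + circ a c).

Definition brace_star (V : finZmodType) (circ : V -> V -> V) (a b : V) : V :=
  circ a b - a - b.

(* Main.v *)
Require Import Defs.
From HB Require Import structures.
From mathcomp Require Import all_boot all_order all_algebra.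
From mathcomp Require Import fingroup zify.
Set Implicit Arguments. Unset Strict Implicit.
Import GRing.Theory.
Local Open Scope ring_scope.

Section Basic.
Variable V : finZmodType.
Implicit Types H S X Y : {set V}.

Lemma addsub0 H : is_addsub H -> 0 \in H.
Proof. by case/andP. Qed.
Lemma addsubB H x y : is_addsub H -> x \in H -> y \in H -> x - y \in H.
Proof.
case/andP=> _ /forallP Hs xH yH.
by have := implyP (Hs x) xH => /forallP /(_ y) /implyP /(_ yH).
Qed.
Lemma addsubN H x : is_addsub H -> x \in H -> - x \in H.
Proof. move=> hH xH. by rewrite -sub0r addsubB // addsub0. Qed.
Lemma addsubD H x y : is_addsub H -> x \in H -> y \in H -> x + y \in H.
Proof. move=> hH xH yH. by rewrite -[y]opprK addsubB // addsubN. Qed.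
Lemma addsubI H : is_addsub H -> (forall x y, x \in H -> y \in H -> x - y \in H).
Proof. move=> hH x y; exact: addsubB. Qed.
Lemma is_addsubP H : 0 \in H -> (forall x y, x \in H -> y \in H -> x - y \in H) -> is_addsub H.
Proof.
move=> H0 Hs; apply/andP; split=> //; apply/forallP=> x; apply/implyP=> xH.
apply/forallP=> y; apply/implyP=> yH; exact: Hs.
Qed.
Lemma addsubT : is_addsub [set: V].
Proof. by apply: is_addsubP => *; rewrite inE. Qed.
Lemma addsub1 : is_addsub [set 0 : V].
Proof. apply: is_addsubP; first by rewrite inE. move=> x y; rewrite !inE => /eqP-> /eqP->. by rewrite subr0. Qed.

Lemma addspan_addsub S : is_addsub (addspan S).
Proof.
apply: is_addsubP.
  by apply/bigcapP=> H /andP[hH _]; exact: addsub0.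
move=> x y /bigcapP hx /bigcapP hy; apply/bigcapP=> H hH.
case/andP: (hH) => hHs _; apply: addsubB => //; [exact: hx | exact: hy].
Qed.
Lemma addspan_sup S : S \subset addspan S.
Proof. apply/subsetP=> x xS; apply/bigcapP=> H /andP[_ /subsetP]; exact. Qed.
Lemma addspan_min S H : is_addsub H -> S \subset H -> addspan S \subset H.
Proof. move=> hH sSH; apply/subsetP=> x /bigcapP; apply; by rewrite hH. Qed.
Lemma addspan_mono S S' : S \subset S' -> addspan S \subset addspan S'.
Proof.
move=> sS; apply: addspan_min; first exact: addspan_addsub.
exact: subset_trans sS (addspan_sup S').
Qed.

Lemma span_additive (f : V -> V) (fD : forall x y, f (x + y) = f x + f y) S H :
  is_addsub H -> (forall s, s \in S -> f s \in H) -> forall y, y \in addspan S -> f y \in H.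
Proof.
move=> hH hS y.
have f0 : f 0 = 0.
  by apply: (@addrI _ (f 0)); rewrite -fD !addr0.
have fB : forall x z, f (x - z) = f x - f z.
  by move=> x z; rewrite -[in RHS](subrK z x) [in RHS]fD addrK.
have sub : addspan S \subset [set y | f y \in H].
  apply: addspan_min.
    apply: is_addsubP; first by rewrite inE f0 addsub0.
    move=> x z; rewrite !inE fB => hx hz; exact: addsubB.
  by apply/subsetP=> s sS; rewrite inE hS.
by move=> /(subsetP sub); rewrite inE.
Qed.

Variable op : V -> V -> V.
Lemma starset_addsub X Y : is_addsub (starset op X Y).
Proof. exact: addspan_addsub. Qed.
Lemma mem_starset X Y x y : x \in X -> y \in Y -> op x y \in starset op X Y.
Proof. move=> xX yY; apply: (subsetP (addspan_sup _)); exact: imset2_f. Qed.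
Lemma starset_min X Y H : is_addsub H ->
  (forall x y, x \in X -> y \in Y -> op x y \in H) -> starset op X Y \subset H.
Proof.
move=> hH hXY; apply: addspan_min => //; apply/subsetP=> z /imset2P[x y xX yY ->].
exact: hXY.
Qed.
Lemma starset_mono X X' Y Y' : X \subset X' -> Y \subset Y' ->
  starset op X Y \subset starset op X' Y'.
Proof.
move=> sX sY; apply: starset_min; first exact: starset_addsub.
move=> x y xX yY; apply: mem_starset; [exact: (subsetP sX) | exact: (subsetP sY)].
Qed.
End Basic.


Section Grp.
Variable V : finZmodType.
Lemma addsub_group (H : {set V}) : is_addsub H -> group_set H.
Proof.
move=> hH; apply/group_setP; split; first by rewrite FinRing.zmod1gE addsub0.
move=> x y xH yH; rewrite FinRing.zmodMgE; exact: addsubD.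
Qed.
Lemma card_div (H K : {set V}) : is_addsub H -> is_addsub K -> H \subset K -> (#|H| %| #|K|)%N.
Proof. move=> hH hK sHK. exact: (@cardSg _ (@Group _ K (addsub_group hK)) (@Group _ H (addsub_group hH)) sHK). Qed.
Lemma addsub_eq0 (H : {set V}) : is_addsub H -> H \subset [set 0] -> H = [set 0].
Proof. move=> hH s; apply/eqP; rewrite eqEsubset s sub1set addsub0 //. Qed.
End Grp.

Section Chain.
Variable V : finZmodType.
Variables p n : nat.
Hypothesis hp : prime p.
Hypothesis hV : #|V| = (p ^ n)%N.
Variable F : {set V} -> {set V}.
Hypothesis Fmono : forall X Y : {set V}, X \subset Y -> F X \subset F Y.
Hypothesis Fsub : forall X, is_addsub (F X).
Let X i := iter i F setT.

Lemma chain_addsub i : is_addsub (X i).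
Proof. case: i => [|i]; [exact: addsubT | exact: Fsub]. Qed.
Lemma chain_dec i : X i.+1 \subset X i.
Proof. elim: i => [|i IH]; first exact: subsetT. exact: Fmono. Qed.
Lemma chain_decn j k : (j <= k)%N -> X k \subset X j.
Proof.
move=> /subnK <-; elim: (k - j)%N => [|d IH] //=.
exact: subset_trans (chain_dec _) IH.
Qed.

Lemma chain_bound : (exists m, X m = [set 0]) -> X n = [set 0].
Proof.
move=> [m Xm].
have p1 : (1 < p)%N by exact: prime_gt1.
have cardT : forall i, (#|X i| %| p ^ n)%N.
  move=> i; rewrite -hV -cardsT; apply: card_div; [exact: chain_addsub|exact: addsubT|exact: subsetT].
have claim : forall i, X i = [set 0] \/ (#|X i| * p ^ i <= p ^ n)%N.
  elim=> [|i IH]; first by right; rewrite expn0 muln1 /X /= cardsT hV.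
  case: (boolP (X i.+1 == [set 0])) => [/eqP->|ne1]; first by left.
  right.
  have ne0 : X i <> [set 0].
    move=> e; move/negP: ne1; apply; apply/eqP; apply: addsub_eq0; first exact: chain_addsub.
    by rewrite -e chain_dec.
  have neq : X i.+1 != X i.
    apply/negP=> /eqP e; apply: ne0.
    have st : forall k, X (i + k) = X i.
      elim=> [|k IHk]; first by rewrite addn0.
      by rewrite addnS /X iterS -/(X (i + k)) IHk -/(X i) -iterS -/(X i.+1) e.
    apply: addsub_eq0; first exact: chain_addsub.
    by rewrite -(st m) -Xm chain_decn // leq_addl.
  have prop : X i.+1 \proper X i by rewrite properEneq neq chain_dec.
  case: IH => [//|IH].
  have [a _ ea] := elimT (dvdn_pfactor _ _ hp) (cardT i.+1).
  have [b _ eb] := elimT (dvdn_pfactor _ _ hp) (cardT i).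
  have ab : (a < b)%N by rewrite -(ltn_exp2l _ _ p1) -ea -eb proper_card.
  apply: leq_trans IH.
  by rewrite ea eb -!expnD leq_exp2l // addnS -addSn leq_add2r.
case: (claim n) => [//|h].
apply/eqP; rewrite eq_sym eqEcard sub1set addsub0 ?chain_addsub // cards1.
by move: h; rewrite -{2}[(p ^ n)%N]mul1n leq_pmul2r // expn_gt0 prime_gt0.
Qed.
End Chain.


Section Strong.
Variable V : finZmodType.
Variable op : V -> V -> V.
Notation sp := (strongpow op).

Lemma size_sl k : size (strong_list op k) = k.
Proof. by elim: k => //= k IH; rewrite size_rcons IH. Qed.

Lemma sl_S k : strong_list op k.+1 = rcons (strong_list op k) (strong_next op (strong_list op k)).
Proof. by []. Qed.

Lemma nth_sl k i : (i < k)%N -> nth setT (strong_list op k) i = sp i.+1.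
Proof.
elim: k => // k IH; rewrite ltnS leq_eqVlt => /orP [/eqP-> //| lt].
by rewrite sl_S nth_rcons size_sl lt IH.
Qed.

Lemma sp_rec k : sp k.+2 =
  addspan (\bigcup_(j < k.+1) starset op (sp j.+1) (sp (k - j).+1)).
Proof.
rewrite {1}/strongpow sl_S nth_rcons size_sl ltnn eqxx.
have hs := size_sl k.+1.
rewrite /strong_next; case E: (strong_list op k.+1) hs => [//|x s'] hs.
rewrite -E size_sl; congr addspan; apply: eq_bigr => j _.
rewrite !nth_sl //; last by rewrite ltnS leq_subr.
Qed.

Lemma sp0 : sp 0 = setT. Proof. by []. Qed.
Lemma sp1 : sp 1 = setT. Proof. by []. Qed.

Lemma sp_addsub k : is_addsub (sp k).
Proof.
case: k => [|[|k]]; try exact: addsubT.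
rewrite sp_rec; exact: addspan_addsub.
Qed.

Lemma sp_dec_aux k : forall l, (l <= k)%N -> sp l.+1 \subset sp l.
Proof.
elim: k => [|k IH] l hl.
  by move: hl; rewrite leqn0 => /eqP->; rewrite sp0 subsetT.
case: (leqP l k) => [lk|kl]; first exact: IH.
have -> : l = k.+1 by apply/eqP; rewrite eqn_leq hl kl.
case: k IH {hl kl} => [|k] IH; first by rewrite sp1 subsetT.
rewrite !sp_rec; apply: addspan_min; first exact: addspan_addsub.
apply/bigcupsP=> j _.
have jk : (j <= k.+1)%N by rewrite -ltnS.
apply: subset_trans (addspan_sup _).
case: (leqP j k) => [jle|jgt].
  have -> : (k.+1 - j = (k - j).+1)%N by rewrite subSn.
  have jlt : (j < k.+1)%N by rewrite ltnS.
  apply: subset_trans (bigcup_sup (Ordinal jlt) isT) => /=.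
  apply: starset_mono => //; apply: IH; rewrite ltnS; exact: leq_subr.
have ej : (j : nat) = k.+1 by apply/eqP; rewrite eqn_leq jk jgt.
rewrite ej subnn.
apply: subset_trans (bigcup_sup (Ordinal (ltnSn k)) isT) => /=.
rewrite subnn; apply: starset_mono => //; exact: IH.
Qed.

Lemma sp_dec k : sp k.+1 \subset sp k.
Proof. exact: (sp_dec_aux (leqnn k)). Qed.

Lemma sp_decn a b : (a <= b)%N -> sp b \subset sp a.
Proof.
move=> /subnK <-; elim: (b - a)%N => [|d IH] //=.
exact: subset_trans (sp_dec _) IH.
Qed.

Lemma sp_gen k H : is_addsub H ->
  (forall a b x y, (0 < a)%N -> (0 < b)%N -> (a + b = k.+2)%N ->
     x \in sp a -> y \in sp b -> op x y \in H) -> sp k.+2 \subset H.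
Proof.
move=> hH h; rewrite sp_rec; apply: addspan_min => //.
apply/bigcupsP=> j _; apply: starset_min => // x y hx hy.
apply: (h j.+1 (k - j).+1) => //.
have : (j <= k)%N by rewrite -ltnS.
lia.
Qed.

Lemma leftpow_S i : leftpow op i.+2 = starset op setT (leftpow op i.+1).
Proof. by []. Qed.
Lemma rightpow_S i : rightpow op i.+2 = starset op (rightpow op i.+1) setT.
Proof. by []. Qed.
Lemma rightpow_addsub i : is_addsub (rightpow op i).
Proof. case: i => [|[|i]]; [exact: addsubT|exact: addsubT|exact: starset_addsub]. Qed.
Lemma leftpow_addsub i : is_addsub (leftpow op i).
Proof. case: i => [|[|i]]; [exact: addsubT|exact: addsubT|exact: starset_addsub]. Qed.
Lemma rightpow_dec i : rightpow op i.+1 \subset rightpow op i.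
Proof.
elim: i => [|[|i] IH]; try exact: subsetT.
rewrite rightpow_S (rightpow_S i); exact: starset_mono.
Qed.

Hypothesis opD : forall a x y, op a (x + y) = op a x + op a y.
Hypothesis HL : forall i a y, y \in rightpow op i -> op a y \in rightpow op i.
Variable al : nat.
Hypothesis hal : leftpow op al.+1 = [set 0].

Lemma step j m : (0 < m)%N -> sp m \subset rightpow op j.+1 ->
  sp (1 + al * m) \subset rightpow op j.+2.
Proof.
move=> m0 hm.
set I := rightpow op j.+2.
have hI : is_addsub I := rightpow_addsub _.
pose W s := addspan (I :|: leftpow op s.+1).
have claim : forall s k, (1 + s * m <= k)%N -> sp k \subset W s.
  elim=> [|s IH] k hk.
    apply: subset_trans (subsetT _) _.
    apply: subset_trans (addspan_sup _); exact: subsetUr.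
  case: k hk => [|[|k]] hk; try (exfalso; move: hk; rewrite mulSn; lia).
  apply: sp_gen; first exact: addspan_addsub.
  move=> a b x y a0 b0 hab hx hy.
  case: (leqP m a) => [ma|am].
    have xr : x \in rightpow op j.+1 by apply: (subsetP hm); exact: (subsetP (sp_decn ma)).
    apply: (subsetP (addspan_sup _)); rewrite inE; apply/orP; left.
    rewrite /I rightpow_S; exact: mem_starset.
  have yW : y \in W s.
    apply: (subsetP (IH b _)) => //; move: hk; rewrite mulSn; lia.
  apply: (span_additive (opD x) (addspan_addsub _) _ yW) => t.
  rewrite inE => /orP [tI|tL]; apply: (subsetP (addspan_sup _)); rewrite inE; apply/orP.
    by left; exact: HL.
  by right; rewrite leftpow_S; apply: mem_starset.
apply: subset_trans (claim al _ (leqnn _)) _.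
apply: addspan_min => //; rewrite hal subUset subxx sub1set addsub0 //.
Qed.

Fixpoint M j := if j is j'.+1 then (1 + al * M j')%N else 1%N.

Lemma M_pos j : (0 < M j)%N. Proof. by case: j. Qed.

Lemma sp_M j : sp (M j) \subset rightpow op j.+1.
Proof. elim: j => [|j IH]; first exact: subsetT. exact: step (M_pos j) IH. Qed.

Lemma M_bound j : (M j <= al.+1 ^ j)%N.
Proof.
elim: j => [|j IH] //=.
have h1 : (0 < al.+1 ^ j)%N by rewrite expn_gt0.
rewrite expnS mulSn; move: IH h1.
set u := (al.+1 ^ j)%N; set v := M j.
nia.
Qed.
End Strong.

Section Generic.
Variable V : finZmodType.
Variable op : V -> V -> V.
Hypothesis opD : forall a x y, op a (x + y) = op a x + op a y.
Hypothesis HL : forall i a y, y \in rightpow op i -> op a y \in rightpow op i.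

Theorem generic p n : prime p -> #|V| = (p ^ n)%N ->
  left_nilpotent op -> right_nilpotent op ->
  strongpow op ((n.+1) ^ (n.+1))%N = [set 0 : V].
Proof.
move=> hp hV [ml hl] [mr hr].
have L : leftpow op n.+1 = [set 0].
  apply: (chain_bound hp hV (F := fun X => starset op setT X)).
  - by move=> X Y sXY; apply: starset_mono.
  - by move=> X; apply: starset_addsub.
  - by exists ml.-1.
have R : rightpow op n.+1 = [set 0].
  apply: (chain_bound hp hV (F := fun X => starset op X setT)).
  - by move=> X Y sXY; apply: starset_mono.
  - by move=> X; apply: starset_addsub.
  - by exists mr.-1.
apply: addsub_eq0; first exact: sp_addsub.
rewrite -R; apply: subset_trans (sp_M opD HL L n).
apply: sp_decn; apply: leq_trans (M_bound _ _) _.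
by rewrite expnS leq_pmull.
Qed.
End Generic.


Lemma rp_small (V : finZmodType) (op : V -> V -> V) i : (i <= 1)%N -> rightpow op i = setT.
Proof. by case: i => [|[|]]. Qed.

Lemma preLie_HL (V : finZmodType) (mul : V -> V -> V) : is_preLie mul ->
  forall i a y, y \in rightpow mul i -> mul a y \in rightpow mul i.
Proof.
move=> [hL [hR hJ]].
elim=> [|[|i] IH] a y hy; try by rewrite rp_small // inE.
move: hy; rewrite rightpow_S => hy.
have hH := @starset_addsub _ mul (rightpow mul i.+1) setT.
apply: (span_additive (hR a) hH _ hy) => s /imset2P[x c hx _ ->].
have e := hJ a x c.
have -> : mul a (mul x c) = mul (mul a x) c - (mul (mul x a) c - mul x (mul a c)).
  by rewrite -e opprB addrC subrK.
apply: addsubB => //; first by apply: mem_starset => //; exact: IH.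
apply: addsubB => //; apply: mem_starset; rewrite ?inE //.
apply: (subsetP (rightpow_dec _ i.+1)); rewrite rightpow_S; apply: mem_starset; by rewrite ?inE.
Qed.

Section Brace.
Variable V : finZmodType.
Variable circ : V -> V -> V.
Hypothesis hb : is_brace circ.
Let bs := brace_star circ.
Let lam a y := circ a y - a.

Let assoc : forall a b c, circ a (circ b c) = circ (circ a b) c.
Proof. by case: hb. Qed.
Let law : forall a b c, circ a (b + c) + a = circ a b + circ a c.
Proof. by case: hb => _ []. Qed.

Lemma b_r0 a : circ a 0 = a.
Proof.
have := law a 0 0; rewrite addr0 => h.
by apply: (@addrI _ (circ a 0)); rewrite -h.
Qed.

Lemma b_inv a : exists b, circ a b = 0 /\ circ b a = 0.
Proof.
case: hb => _ [[e [he hinv]] _].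
have e0 : e = 0 by rewrite -(b_r0 e); case: (he 0).
by rewrite -e0.
Qed.

Lemma lamD a x y : lam a (x + y) = lam a x + lam a y.
Proof.
rewrite /lam.
transitivity ((circ a (x + y) + a) - (a + a)); first by rewrite opprD addrA addrK.
by rewrite law opprD addrACA.
Qed.

Lemma lamB a x y : lam a (x - y) = lam a x - lam a y.
Proof.
have f0 : lam a 0 = 0 by apply: (@addrI _ (lam a 0)); rewrite -lamD !addr0.
by rewrite -[in RHS](subrK y x) [in RHS]lamD addrK.
Qed.

Lemma bsD a x y : bs a (x + y) = bs a x + bs a y.
Proof.
have e : forall z, bs a z = lam a z - z by [].
by rewrite !e lamD opprD addrACA.
Qed.

Lemma law_sub u y z : circ u (y - z) = circ u y - circ u z + u.
Proof.
have := law u (y - z) z; rewrite subrK => h.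
by rewrite addrAC h addrK.
Qed.

Lemma lam_comp u v c : lam (circ u v) c = lam u (lam v c).
Proof. by rewrite /lam -assoc law_sub addrK. Qed.

Lemma brace_lam_inv : forall i a y, y \in rightpow bs i -> lam a y \in rightpow bs i.
Proof.
elim=> [|[|i] IH] a y hy; try by rewrite rp_small // inE.
move: hy; rewrite rightpow_S => hy.
have hH := @starset_addsub _ bs (rightpow bs i.+1) setT.
apply: (span_additive (lamD a) hH _ hy) => s /imset2P[x c hx _ ->].
have [ab [h1 h2]] := b_inv a.
pose x' := circ (circ a x) ab.
have c1 : circ x' a = circ a x by rewrite /x' -assoc h2 b_r0.
have c2 : x' = lam a x + lam a (bs x ab).
  rewrite /x' -assoc.
  have -> : circ x ab = x + ab + bs x ab.
    by rewrite /bs /brace_star [RHS]addrC -[_ - x - ab]addrA -opprD subrK.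
  rewrite -[LHS](subrK a) -/(lam a _) !lamD.
  have -> : lam a ab = - a by rewrite /lam h1 sub0r.
  by rewrite addrAC subrK.
have hx' : x' \in rightpow bs i.+1.
  rewrite c2; apply: addsubD; [exact: rightpow_addsub| exact: IH|].
  apply: IH; apply: (subsetP (rightpow_dec _ i.+1)); rewrite rightpow_S; exact: mem_starset.
have -> : lam a (bs x c) = bs x' (lam a c).
  have e : forall u z, bs u z = lam u z - z by [].
  by rewrite !e lamB -lam_comp -c1 lam_comp.
by apply: mem_starset; rewrite ?inE.
Qed.

Lemma brace_HL : forall i a y, y \in rightpow bs i -> bs a y \in rightpow bs i.
Proof.
move=> i a y hy.
have -> : bs a y = lam a y - y by [].
apply: addsubB => //; [exact: rightpow_addsub | exact: brace_lam_inv].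
Qed.
End Brace.

Unset Implicit Arguments. Set Strict Implicit.

Theorem corollary19 (p n : nat) (hp : prime p) :
  (forall (V : finZmodType) (mul : V -> V -> V),
      is_preLie mul -> #|V| = (p ^ n)%N ->
      left_nilpotent mul -> right_nilpotent mul ->
      strongpow mul ((n.+1) ^ (n.+1))%N = [set 0 : V])
  /\
  (forall (V : finZmodType) (circ : V -> V -> V),
      is_brace circ -> #|V| = (p ^ n)%N ->
      left_nilpotent (brace_star circ) -> right_nilpotent (brace_star circ) ->
      strongpow (brace_star circ) ((n.+1) ^ (n.+1))%N = [set 0 : V]).
Proof.
split.
  move=> V mul h; apply: generic => //; [by case: h => _ [] | exact: preLie_HL].
move=> V circ h; apply: generic => //; [exact: bsD | exact: brace_HL].
Qed.
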